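(* In the cone setting of the context, for any $h\in\mathcal C_{\mathbb C}$ and all $\ell\in\mathcal C'_{\mathbb C}$, \[|\ell(h)|\ge e^{-\delta_{\mathcal C}(h,e)}\frac{\kappa}{\sqrt2}\|h\|\,|\ell(e)|.\]
   Context: Cone setting. $V$ is a real topological vector space, $\mathcal S\subset V'$ a set of linear functionals such that $\ell(x)=0$ for all $\ell\in\mathcal S$ implies $x=0$, $C_{\mathbb R}=\{h\in V\setminus\{0\}:\ell(h)\ge0\ \forall\ell\in\mathcal S\}$, and $e\in C_{\mathbb R}$ is such that for every $h\in V$ some $\lambda\ge0$ has $\lambda e-h\in C_{\mathbb R}$. Norm $\|h\|=\inf\{\lambda\ge0:\ell(\lambda e\pm h)\ge0\ \forall\ell\in\mathcal S\}$; $\mathcal B_{\mathbb R}$ the completion of $V$; $\mathcal C_{\mathbb R}=\{h\in\mathcal B_{\mathbb R}\setminus\{0\}:\ell(h)\ge0\ \forall\ell\in\mathcal S\}$. $\mathcal S_*$ is the weak-$*$ closure of the convex hull of $\{\lambda\ell:\lambda>0,\ell\in\mathcal S\}$; there exist $m\in\mathcal S_*$, $\kappa\in(0,1)$ with $m(e)=1$ and $m(h)\ge\kappa\|h\|$ on $\mathcal C_{\mathbb R}$. $\mathcal B_{\mathbb C}$ is the complexification (norm $\|x+iy\|=\sup_\theta(\|\Re(e^{i\theta}(x+iy))\|^2+\|\Im(e^{i\theta}(x+iy))\|^2)^{1/2}$), real functionals extended complex-linearly. $\mathcal C_{\mathbb C}=\{z(x+iy):z\ne0,x,y\in\mathcal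 C_{\mathbb R}\}$, $\mathcal C'_{\mathbb C}=\{\ell\in\mathcal B'_{\mathbb C}:\ell(h)\ne0\ \forall h\in\mathcal C_{\mathbb C}\}$. For $h,g\in\mathcal C_{\mathbb C}$, $E(h,g)=\{\ell(h)/\ell(g):\ell\in\mathcal C'_{\mathbb C}\}$ and $\delta_{\mathcal C}(h,g)=\ln\frac{\sup_{z\in E(h,g)}|z|}{\inf_{z\in E(h,g)}|z|}$. *)

(* Defs.v *)
From HB Require Import structures.
From mathcomp Require Import all_boot all_order all_algebra.
From mathcomp Require Import all_classical all_reals all_analysis.
From mathcomp Require Import complex.
Set Implicit Arguments. Unset Strict Implicit. Unset Printing Implicit Defensive.
Import Order.TTheory GRing.Theory Num.Theory.
Import numFieldNormedType.Exports.
Local Open Scope classical_set_scope.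
Local Open Scope ring_scope.

Section ConeDefs.
Context {R : realType} {V : topologicalLmodType R} {B : completeNormedModType R}.

Definition linR {U : lmodType R} (f : U -> R) :=
  forall (a : R) x y, f (a *: x + y) = a * f x + f y.

Definition dualV (l : V -> R) := linR l /\ continuous l.

(* The extensions to the completion B_R of the functionals in S:
   continuous linear f on B_R whose restriction to V (via the embedding j)
   lies in S. *)
Definition Sext (S : set (V -> R)) (j : V -> B) : set (B -> R) :=
  [set f | linR f /\ continuous f /\ S (f \o j)].

Definition coneV (S : set (V -> R)) (h : V) :=
  h <> 0 /\ forall l, S l -> 0 <= l h.

Definition ounorm (S : set (V -> R)) (e h : V) : R :=
  inf [set lam : R | 0 <= lam /\
        forall l, S l -> 0 <= l (lam *: e + h) /\ 0 <= l (lam *: e - h)].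

Definition coneR (S : set (V -> R)) (j : V -> B) (h : B) :=
  h <> 0 /\ forall f, Sext S j f -> 0 <= f h.

(* m belongs to S_* : the weak-* closure (in V') of the convex hull of
   { lam * l : lam > 0, l in S }.  Weak-* neighbourhoods: finitely many
   test points and a tolerance eps. *)
Definition inSstar (S : set (V -> R)) (m : V -> R) :=
  dualV m /\
  forall (xs : seq V) (eps : R), 0 < eps ->
    exists n (t lam : 'I_n.+1 -> R) (ls : 'I_n.+1 -> V -> R),
      (forall i, 0 <= t i) /\ \sum_(i < n.+1) t i = 1 /\
      (forall i, 0 < lam i /\ S (ls i)) /\
      forall x, x \in xs ->
        `| m x - \sum_(i < n.+1) t i * (lam i * ls i x) | < eps.

(* Complexification B_C = B_R x B_R, the pair (x, y) standing for x + iy. *)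
Definition scaleC (z : R[i]) (w : B * B) : B * B :=
  (complex.Re z *: w.1 - complex.Im z *: w.2, complex.Im z *: w.1 + complex.Re z *: w.2).

Definition addC (w w' : B * B) : B * B := (w.1 + w'.1, w.2 + w'.2).
Definition subC (w w' : B * B) : B * B := (w.1 - w'.1, w.2 - w'.2).

Definition normBC (w : B * B) : R :=
  sup [set r : R | exists theta : R,
        r = Num.sqrt (`| cos theta *: w.1 - sin theta *: w.2 | ^+ 2
                     + `| sin theta *: w.1 + cos theta *: w.2 | ^+ 2)].

Definition linC (L : B * B -> R[i]) :=
  forall (z : R[i]) w w', L (addC (scaleC z w) w') = z * L w + L w'.

Definition contC (L : B * B -> R[i]) :=
  forall w (eps : R), 0 < eps -> exists2 d : R, 0 < d &
    forall w', normBC (subC w' w) < d -> Normc.normc (L w' - L w) < eps.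

Definition dualC (L : B * B -> R[i]) := linC L /\ contC L.

Definition coneC (S : set (V -> R)) (j : V -> B) (w : B * B) :=
  exists (z : R[i]) (x y : B),
    z <> 0 /\ coneR S j x /\ coneR S j y /\ w = scaleC z (x, y).

Definition dualC' (S : set (V -> R)) (j : V -> B) (L : B * B -> R[i]) :=
  dualC L /\ forall w, coneC S j w -> L w <> 0.

Definition Eset (S : set (V -> R)) (j : V -> B) (h g : B * B) : set R[i] :=
  [set L h / L g | L in dualC' S j].

Definition deltaC (S : set (V -> R)) (j : V -> B) (h g : B * B) : \bar R :=
  let A := [set (Normc.normc z)%:E | z in Eset S j h g] in
  let s := ereal_sup A in
  let i := ereal_inf A in
  if ((0 < i)%E && (s < +oo)%E) then (ln (fine s / fine i))%:E else +oo%E.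

End ConeDefs.

(* Main.v *)
Require Import Defs.
From HB Require Import structures.
From mathcomp Require Import all_boot all_order all_algebra.
From mathcomp Require Import all_classical all_reals all_analysis.
From mathcomp Require Import complex.
From mathcomp Require Import ring lra.
Import Order.TTheory GRing.Theory Num.Theory.
Import numFieldNormedType.Exports.
Local Open Scope classical_set_scope.
Local Open Scope ring_scope.

Section H.
Context {R : realType} {B : completeNormedModType R}.

Lemma core (a b : R) (u v : B) :
  `|a *: u - b *: v| ^+ 2 + `|b *: u + a *: v| ^+ 2 <=
  2 * (a ^+ 2 + b ^+ 2) * (`|u| ^+ 2 + `|v| ^+ 2).
Proof.
have h1 : `|a *: u - b *: v| <= `|a| * `|u| + `|b| * `|v|.
  by rewrite -!normrZ (le_trans (ler_normB _ _)).
have h2 : `|b *: u + a *: v| <= `|b| * `|u| + `|a| * `|v|.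
  by rewrite -!normrZ (le_trans (ler_normD _ _)).
have n1 := normr_ge0 (a *: u - b *: v).
have n2 := normr_ge0 (b *: u + a *: v).
have pa := normr_ge0 a. have pb := normr_ge0 b.
have pu := normr_ge0 u. have pv := normr_ge0 v.
rewrite -(real_normK (num_real a)) -(real_normK (num_real b)).
set A := `|a| in h1 h2 pa *; set Bb := `|b| in h1 h2 pb *.
set U := `|u| in h1 h2 pu *; set W := `|v| in h1 h2 pv *.
set X := `|_ - _| in h1 n1 *; set Y := `|_ + _| in h2 n2 *.
have s1 : X ^+ 2 <= (A * U + Bb * W) ^+ 2 by rewrite ler_sqr ?nnegrE ?addr_ge0 ?mulr_ge0.
have s2 : Y ^+ 2 <= (Bb * U + A * W) ^+ 2 by rewrite ler_sqr ?nnegrE ?addr_ge0 ?mulr_ge0.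
have k1 : 0 <= (A - Bb) ^+ 2 by apply: sqr_ge0.
have k2 : 0 <= (U - W) ^+ 2 by apply: sqr_ge0.
have k3 : 0 <= (A - Bb) ^+ 2 * (U ^+ 2 + W ^+ 2) by rewrite mulr_ge0 // addr_ge0 // sqr_ge0.
have k4 : 0 <= (2 * A * Bb) * (U - W) ^+ 2 by rewrite mulr_ge0 // !mulr_ge0.
lra.
Qed.

Lemma vid1 (a b c s : R) (x y : B) :
  c *: (a *: x - b *: y) - s *: (b *: x + a *: y) =
  (c * a - s * b) *: x - (c * b + s * a) *: y.
Proof.
rewrite !(scalerDr, scalerBr, scalerN, scalerDl, scalerBl, scaleNr, scalerA) !opprD !addrA.
by congr (_ - _); rewrite addrAC.
Qed.

Lemma vid2 (a b c s : R) (x y : B) :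
  s *: (a *: x - b *: y) + c *: (b *: x + a *: y) =
  (c * b + s * a) *: x + (c * a - s * b) *: y.
Proof.
rewrite !(scalerDr, scalerBr, scalerN, scalerDl, scalerBl, scaleNr, scalerA) !addrA.
by rewrite [(c * b) *: x + _]addrC [in LHS](addrAC ((s * a) *: x)) [in LHS]addrAC.
Qed.

Lemma elem_le (w : B * B) (t : R) :
  Num.sqrt (`| cos t *: w.1 - sin t *: w.2 | ^+ 2 + `| sin t *: w.1 + cos t *: w.2 | ^+ 2)
  <= Num.sqrt (2 * (`|w.1| ^+ 2 + `|w.2| ^+ 2)).
Proof.
apply: ler_wsqrtr.
by have := core (cos t) (sin t) w.1 w.2; rewrite cos2Dsin2 mulr1.
Qed.

Lemma normBC_hasub (w : B * B) : has_ubound [set r : R | exists theta : R,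
        r = Num.sqrt (`| cos theta *: w.1 - sin theta *: w.2 | ^+ 2
                     + `| sin theta *: w.1 + cos theta *: w.2 | ^+ 2)].
Proof. by exists (Num.sqrt (2 * (`|w.1| ^+ 2 + `|w.2| ^+ 2))) => r [t ->]; apply: elem_le. Qed.

Lemma normBC_ge0 (w : B * B) : Num.sqrt (`|w.1| ^+ 2 + `|w.2| ^+ 2) <= normBC w.
Proof.
apply: (ub_le_sup (normBC_hasub w)); exists 0.
by rewrite cos0 sin0 !scale1r !scale0r subr0 add0r.
Qed.

Lemma normBC_ge1 (w : B * B) : `|w.1| <= normBC w.
Proof.
apply: le_trans (normBC_ge0 w).
by rewrite -[X in X <= _]normr_id -(sqrtr_sqr `|w.1|) ler_wsqrtr // lerDl sqr_ge0.
Qed.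

Lemma normBC_ge2 (w : B * B) : `|w.2| <= normBC w.
Proof.
apply: le_trans (normBC_ge0 w).
by rewrite -[X in X <= _]normr_id -(sqrtr_sqr `|w.2|) ler_wsqrtr // lerDr sqr_ge0.
Qed.

Lemma normBC_scale (a b : R) (x y : B) :
  normBC (scaleC (a +i* b)%C (x, y)) <=
  Num.sqrt 2 * Num.sqrt ((a ^+ 2 + b ^+ 2) * (`|x| ^+ 2 + `|y| ^+ 2)).
Proof.
rewrite -sqrtrM // mulrA.
apply: ge_sup; first by exists (Num.sqrt (`|(scaleC (a +i* b)%C (x, y)).1| ^+ 2
   + `|(scaleC (a +i* b)%C (x, y)).2| ^+ 2)); exists 0;
   rewrite cos0 sin0 !scale1r !scale0r subr0 add0r.
move=> r [t ->] /=; rewrite vid1 vid2; apply: ler_wsqrtr.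
apply: le_trans (core _ _ _ _) _.
have -> : (cos t * a - sin t * b) ^+ 2 + (cos t * b + sin t * a) ^+ 2 =
   (a ^+ 2 + b ^+ 2) * (cos t ^+ 2 + sin t ^+ 2) by ring.
by rewrite cos2Dsin2 mulr1.
Qed.
Lemma cmul (a b c d : R) : ((a +i* b) * (c +i* d) = (a * c - b * d) +i* (a * d + b * c))%C.
Proof. by []. Qed.
Lemma cadd (a b c d : R) : ((a +i* b) + (c +i* d) = (a + c) +i* (b + d))%C.
Proof. by []. Qed.
Lemma csub (a b c d : R) : ((a +i* b) - (c +i* d) = (a - c) +i* (b - d))%C.
Proof. by []. Qed.
Lemma c1 : ((1 : R) +i* 0)%C = 1.
Proof. by []. Qed.
Lemma normc_ge0 (z : R[i]) : 0 <= Normc.normc z.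
Proof. by case: z => a b; apply: sqrtr_ge0. Qed.
Lemma normcE (a b : R) : Normc.normc (a +i* b)%C = Num.sqrt (a ^+ 2 + b ^+ 2).
Proof. by []. Qed.
End H.

Theorem lemma5p14 (R : realType) (V : topologicalLmodType R)
  (S : set (V -> R)) (e : V)
  (B : completeNormedModType R) (j : V -> B)
  (m : V -> R) (mext : B -> R) (kappa : R)
  (* S is a set of continuous linear functionals on V *)
  (HS : forall l, S l -> dualV l)
  (* S separates points of V *)
  (Hsep : forall x, (forall l, S l -> l x = 0) -> x = 0)
  (* e lies in C_R and is an order unit *)
  (He : coneV S e)
  (Hunit : forall h, exists lam : R, 0 <= lam /\ coneV S (lam *: e - h))
  (* B is the completion of (V, ||.||): j is a linear isometric embedding
     with dense range into the Banach space B *)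
  (Hjlin : forall (a : R) x y, j (a *: x + y) = a *: j x + j y)
  (Hjnorm : forall h, `| j h | = ounorm S e h)
  (Hjdense : closure (range j) = setT)
  (* m in S_*, m(e) = 1, m(h) >= kappa ||h|| on \mathcal C_R *)
  (HmS : inSstar S m)
  (Hmext_lin : linR mext) (Hmext_cont : continuous mext)
  (Hmext : mext \o j = m)
  (Hme : m e = 1)
  (Hkappa : 0 < kappa < 1)
  (Hmcone : forall h, coneR S j h -> kappa * `| h | <= mext h) :
  forall h : B * B, coneC S j h ->
  forall L : B * B -> R[i], dualC' S j L ->
    (expeR (- deltaC S j h (j e, 0%R : B))
       * ((kappa / Num.sqrt 2) * normBC h * Normc.normc (L (j e, 0%R : B)))%:E
     <= (Normc.normc (L h))%:E)%E.
Proof.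
move=> h hC L HL.
have [[Llin Lcont] Lnz] := HL.
have [k0 k1] := andP Hkappa.
have mext0 : mext 0 = 0.
  have := Hmext_lin 1 0 0; rewrite scaler0 addr0 mul1r => H.
  by have := congr1 (fun t => t - mext 0) H; rewrite subrr addrK.
have mextZ a x : mext (a *: x) = a * mext x.
  by have := Hmext_lin a x 0; rewrite addr0 mext0 addr0.
have mextD x y : mext (x + y) = mext x + mext y.
  by have := Hmext_lin 1 x y; rewrite scale1r mul1r.
have mextN x : mext (- x) = - mext x.
  by rewrite -scaleN1r mextZ mulN1r.
have mextB x y : mext (x - y) = mext x - mext y by rewrite mextD mextN.
pose mC (w : B * B) : R[i] := (mext w.1 +i* mext w.2)%C.
have mCscale a b (w : B * B) : mC (scaleC (a +i* b)%C w) = ((a +i* b) * mC w)%C.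
  rewrite /mC /= cmul !mextB !mextD !mextZ; congr Complex; ring.
have mCe : mC (j e, 0) = 1.
  by rewrite /mC /= mext0 -c1 -Hme -Hmext.
have mCadd (w w' : B * B) : mC (Defs.addC w w') = mC w + mC w'.
  by rewrite /mC /= cadd !mextD.
have mCsub (w w' : B * B) : mC (subC w' w) = mC w' - mC w.
  by rewrite /mC /= csub !mextB.
have Hm0 : forall eps : R, 0 < eps -> exists2 d : R, 0 < d &
    forall v : B, `|v| < d -> `|mext v| < eps.
  move=> eps eps0.
  have H0 := (cvgrPdist_lt _ _).1 (Hmext_cont 0) eps eps0.
  have [d d0 Hd] := (@nbhs_norm0P _ B (fun t => `|mext 0 - mext t| < eps)).1 (H0 _).
  exists d => // v /Hd /=.
  by rewrite mext0 sub0r normrN.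
have mCdual : dualC' S j mC.
  split; first split.
  - move=> [a b] w w'; by rewrite mCadd mCscale.
  - move=> w eps eps0.
    have [d d0 Hd] := Hm0 (eps / 2) (divr_gt0 eps0 (ltr0n _ 2)).
    exists d => // w' Hw'; rewrite -mCsub /mC normcE.
    set u := subC w' w.
    have h1 := Hd _ (le_lt_trans (normBC_ge1 u) Hw').
    have h2 := Hd _ (le_lt_trans (normBC_ge2 u) Hw').
    set P := mext u.1 in h1 *; set Q := mext u.2 in h2 *.
    apply: (@le_lt_trans _ _ (`|P| + `|Q|)); last by lra.
    rewrite -(ger0_norm (addr_ge0 (normr_ge0 P) (normr_ge0 Q))) -sqrtr_sqr.
    apply: ler_wsqrtr; rewrite -(real_normK (num_real P)) -(real_normK (num_real Q)).
    have := mulr_ge0 (normr_ge0 P) (normr_ge0 Q); nra.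
  - move=> w [z [x [y [z0 [[x0 Hx] [[y0 Hy] ->]]]]]].
    case: z z0 => a b z0; rewrite mCscale; apply/eqP; rewrite mulf_neq0 //; first exact/eqP.
    apply/eqP; rewrite /mC /= => /(congr1 (@complex.Re R)) /= H; move: (Hmcone x (conj x0 Hx)); rewrite H.
    by apply/negP; rewrite -ltNge mulr_gt0 // normr_gt0; apply/eqP.
have [Le0|Le0] := eqVneq (L (j e, 0)) 0.
  rewrite Le0 Normc.normc0 mulr0 mule0 lee_fin.
  exact: normc_ge0.
have hM : kappa / Num.sqrt 2 * normBC h <= Normc.normc (mC h).
  move: hC => [z [x [y [z0 [[x0 Hx] [[y0 Hy] hE]]]]]].
  case: z z0 hE => a b z0 ->.
  rewrite mCscale Normc.normcM normcE /mC normcE /=.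
  have hP := Hmcone x (conj x0 Hx); have hQ := Hmcone y (conj y0 Hy).
  have hs2 : 0 < Num.sqrt 2 :> R by rewrite sqrtr_gt0.
  apply: (@le_trans _ _ (kappa / Num.sqrt 2 * (Num.sqrt 2 * Num.sqrt ((a ^+ 2 + b ^+ 2) * (`|x| ^+ 2 + `|y| ^+ 2))))).
    by apply: ler_wpM2l; [rewrite divr_ge0 // ltW | exact: normBC_scale].
  rewrite mulrA divfK ?gt_eqF // sqrtrM ?addr_ge0 ?sqr_ge0 // mulrCA.
  apply: ler_wpM2l; first exact: sqrtr_ge0.
  have -> : kappa = Num.sqrt (kappa ^+ 2) by rewrite sqrtr_sqr ger0_norm // ltW.
  rewrite -sqrtrM ?sqr_ge0 //; apply: ler_wsqrtr.
  have nx := normr_ge0 x; have ny := normr_ge0 y.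
  have e1 : 0 <= kappa * `|x| by rewrite mulr_ge0 // ltW.
  have e2 : 0 <= kappa * `|y| by rewrite mulr_ge0 // ltW.
  nra.
rewrite /deltaC; set A := [set _ | _ in _].
have hi : (ereal_inf A <= (Normc.normc (L h / L (j e, 0)))%:E)%E.
  by apply: ereal_inf_lbound; exists (L h / L (j e, 0)) => //; exists L.
have hs : ((Normc.normc (mC h))%:E <= ereal_sup A)%E.
  apply: ereal_sup_ubound; exists (mC h / mC (j e, 0)); last by rewrite mCe divr1.
  by exists mC.
case: ifP => [/andP [ipos sfin]|_]; last first.
  by rewrite /= mul0e lee_fin normc_ge0.
have mCh0 : 0 < Normc.normc (mC h).
  rewrite lt_def normc_ge0 andbT; apply/eqP => /Normc.eq0_normc.
  exact: mCdual.2 h hC.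
move: ipos sfin hi hM mCh0 hs.
case: (ereal_inf A) => [ri| |]; case: (ereal_sup A) => [rs| |] //=;
  rewrite ?lte_fin ?lee_fin ?ltxx ?leey ?leNye //= => ri0 _ hi hM mCh0 hs.
have hMs := le_trans hM hs.
have rs0 : 0 < rs := lt_le_trans mCh0 hs.
have le0 : 0 < Normc.normc (L (j e, 0)).
  by rewrite lt_def normc_ge0 andbT; apply/eqP => /Normc.eq0_normc; apply/eqP.
rewrite expRN lnK; last by rewrite posrE divr_gt0.
rewrite invf_div.
apply: (@le_trans _ _ (ri / rs * (rs * Normc.normc (L (j e, 0))))).
  apply: ler_wpM2l; first by rewrite divr_ge0 // ltW.
  by apply: ler_wpM2r => //; apply: ltW.
rewrite mulrA divfK ?gt_eqF // -ler_pdivlMr //.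
by move: hi; rewrite Normc.normcM Normc.normcV.
Qed.
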